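(* If $X$ is uncountable and $B \subseteq X$ is a Bernstein set, then the game $\Gamma(1_B)$ is not determined, i.e. neither player has a winning strategy.
   Context: Let $A$ be a non-empty countable set and $T$ a pruned tree on $A$ (a set of finite sequences of elements of $A$, closed under initial segments, in which every sequence has a proper extension in $T$). Let $X$ be the set of infinite branches of $T$, with the topology generated by the cylinder sets $O(s) = \{x \in X : s \text{ is an initial segment of } x\}$, $s \in T$. A set $B \subseteq X$ is a Bernstein set if neither $B$ nor $X \setminus B$ contains a non-empty perfect set; $1_B$ is the indicator function of $B$. For $f : X \to \mathbb{R}$, the game $\Gamma(f)$: Player I and Player II alternate, Player I moving first; Player I plays $x_0, x_1, \dots \in A$ subject to $(x_0,\dots,x_t) \in T$ for all $t$, and after each move $x_t$ Player II plays a real number $v_t$. Player II wins the run iff $f(x_0,x_1,\dots) = \limsup_{t\to\infty} v_t$; otherwise Player I wins. *)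

(* Defs.v *)
From Stdlib Require Import Reals List ClassicalEpsilon.
From Coquelicot Require Import Coquelicot.
Import ListNotations.
Open Scope R_scope.

Section Defs.
Context {A : Type}.

Definition is_tree (T : list A -> Prop) : Prop :=
  forall s t : list A, T (s ++ t) -> T s.

Definition is_pruned (T : list A -> Prop) : Prop :=
  forall s, T s -> exists a : A, T (s ++ [a]).

Definition prefix {B : Type} (x : nat -> B) (n : nat) : list B :=
  map x (seq 0 n).

Definition branch (T : list A -> Prop) (x : nat -> A) : Prop :=
  forall n, T (prefix x n).

Definition countable_type : Prop :=
  exists f : A -> nat, forall a b, f a = f b -> a = b.

Definition countable_body (T : list A -> Prop) : Prop :=
  exists g : (nat -> A) -> nat,
    forall x y, branch T x -> branch T y -> g x = g y -> x = y.

(* open subsets of X (topology generated by the cylinders O(s)) *)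
Definition openX (T : list A -> Prop) (U : (nat -> A) -> Prop) : Prop :=
  (forall x, U x -> branch T x) /\
  forall x, U x -> exists n, forall y, branch T y -> prefix y n = prefix x n -> U y.

Definition closedX (T : list A -> Prop) (P : (nat -> A) -> Prop) : Prop :=
  (forall x, P x -> branch T x) /\ openX T (fun y => branch T y /\ ~ P y).

Definition perfectX (T : list A -> Prop) (P : (nat -> A) -> Prop) : Prop :=
  closedX T P /\
  forall x, P x -> forall n, exists y, P y /\ y <> x /\ prefix y n = prefix x n.

Definition bernstein (T : list A -> Prop) (B : (nat -> A) -> Prop) : Prop :=
  (forall x, B x -> branch T x) /\
  ~ (exists P, perfectX T P /\ (exists x, P x) /\ (forall x, P x -> B x)) /\
  ~ (exists P, perfectX T P /\ (exists x, P x) /\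
               (forall x, P x -> branch T x /\ ~ B x)).

Definition indicator (B : (nat -> A) -> Prop) (x : nat -> A) : R :=
  if excluded_middle_informative (B x) then 1 else 0.

(* Strategies.  Player I: from I's previous moves and II's previous moves
   (x_0..x_{t-1}, v_0..v_{t-1}) choose x_t.  Player II: from (x_0..x_t) and
   (v_0..v_{t-1}) choose v_t. *)
Definition strategyI := list A -> list R -> A.
Definition strategyII := list A -> list R -> R.

Definition follows_I (sigma : strategyI) (x : nat -> A) (v : nat -> R) : Prop :=
  forall t, x t = sigma (prefix x t) (prefix v t).

Definition follows_II (tau : strategyII) (x : nat -> A) (v : nat -> R) : Prop :=
  forall t, v t = tau (prefix x (S t)) (prefix v t).

Definition II_wins_run (f : (nat -> A) -> R) (x : nat -> A) (v : nat -> R) : Prop :=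
  LimSup_seq v = Finite (f x).

(* a winning strategy for I must only produce legal moves, and win every run *)
Definition winning_I (T : list A -> Prop) (f : (nat -> A) -> R) (sigma : strategyI) : Prop :=
  forall x v, follows_I sigma x v -> branch T x /\ ~ II_wins_run f x v.

Definition winning_II (T : list A -> Prop) (f : (nat -> A) -> R) (tau : strategyII) : Prop :=
  forall x v, branch T x -> follows_II tau x v -> II_wins_run f x v.

Definition determined (T : list A -> Prop) (f : (nat -> A) -> R) : Prop :=
  (exists sigma, winning_I T f sigma) \/ (exists tau, winning_II T f tau).

End Defs.

(* Main.v *)
Require Import Defs.
From Stdlib Require Import Reals List.
From Coquelicot Require Import Coquelicot.
From Stdlib Require Import Arith Lia Lra ClassicalEpsilon Classical Cantor FunctionalExtensionality.
Import ListNotations.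

Definition agree {B : Type} (x y : nat -> B) (n : nat) : Prop :=
  forall i, (i < n)%nat -> x i = y i.

Lemma prefix_S {B : Type} (x : nat -> B) n : prefix x (S n) = prefix x n ++ [x n].
Proof. unfold prefix. rewrite seq_S, map_app. reflexivity. Qed.

Lemma prefix_length {B : Type} (x : nat -> B) n : length (prefix x n) = n.
Proof. unfold prefix. rewrite length_map, length_seq. reflexivity. Qed.

Lemma prefix_agree {B : Type} (x y : nat -> B) n : prefix x n = prefix y n <-> agree x y n.
Proof.
  induction n as [|n IH].
  - split; [intros _ i Hi; lia| reflexivity].
  - rewrite !prefix_S. split.
    + intros H. apply app_inj_tail in H as [H1 H2].
      apply IH in H1. intros i Hi. destruct (Nat.eq_dec i n). subst; auto. apply H1; lia.
    + intros H. f_equal. apply IH. intros i Hi; apply H; lia. f_equal. apply H; lia.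
Qed.

Lemma agree_sym {B} (x y : nat -> B) n : agree x y n -> agree y x n.
Proof. intros H i Hi; symmetry; auto. Qed.
Lemma agree_trans {B} (x y z : nat -> B) n : agree x y n -> agree y z n -> agree x z n.
Proof. intros H1 H2 i Hi; rewrite H1; auto. Qed.
Lemma agree_le {B} (x y : nat -> B) n m : (m <= n)%nat -> agree x y n -> agree x y m.
Proof. intros Hm H i Hi; apply H; lia. Qed.

Section Generic.
Context {A : Type} (T : list A -> Prop) {Nd : Type}
  (zf : Nd -> nat -> A) (nf : Nd -> nat) (G : Nd -> Prop) (R : Nd -> Nd -> Prop)
  (sp : Nd -> bool -> Nd) (u0 : Nd).
Hypothesis Hsp : forall u b, G u -> G (sp u b) /\ R u (sp u b) /\
   (nf u < nf (sp u b))%nat /\ agree (zf (sp u b)) (zf u) (nf u).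
Hypothesis Hinc : forall u, G u -> exists i, (i < nf (sp u true))%nat /\
   (i < nf (sp u false))%nat /\ zf (sp u true) i <> zf (sp u false) i.
Hypothesis HB : forall u, G u -> branch T (zf u).
Hypothesis HG0 : G u0.

Fixpoint nd (c : nat -> bool) (k : nat) : Nd :=
  match k with O => u0 | S k => sp (nd c k) (c k) end.

Lemma nd_G c k : G (nd c k).
Proof. induction k; simpl; auto. apply Hsp; auto. Qed.

Lemma nd_nf c k : (k <= nf (nd c k))%nat.
Proof. induction k; simpl. lia. pose proof (Hsp (nd c k) (c k) (nd_G c k)). lia. Qed.

Lemma nd_mono c k k' : (k <= k')%nat -> (nf (nd c k) <= nf (nd c k'))%nat /\
   agree (zf (nd c k')) (zf (nd c k)) (nf (nd c k)).
Proof.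
  induction 1. split; [lia| intros i _; reflexivity].
  destruct IHle as [H1 H2]. simpl. pose proof (Hsp (nd c m) (c m) (nd_G c m)) as (_&_&H3&H4).
  split. lia. intros i Hi. rewrite H4 by lia. apply H2; lia.
Qed.

Lemma nd_ext c c' k : (forall j, (j < k)%nat -> c j = c' j) -> nd c k = nd c' k.
Proof.
  induction k; intros H; simpl; auto. rewrite IHk by (intros; apply H; lia).
  rewrite H by lia. reflexivity.
Qed.

Definition lim (c : nat -> bool) (i : nat) : A := zf (nd c (S i)) i.

Lemma lim_agree c k : agree (lim c) (zf (nd c k)) (nf (nd c k)).
Proof.
  intros i Hi. unfold lim. destruct (Nat.le_ge_cases k (S i)) as [H|H].
  - apply (nd_mono c k (S i) H); auto.
  - symmetry. pose proof (nd_nf c (S i)). apply (nd_mono c (S i) k H). lia.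
Qed.

Lemma agree_branch (y z : nat -> A) n : branch T z -> agree y z n -> T (prefix y n).
Proof. intros Hz H. replace (prefix y n) with (prefix z n). apply Hz. symmetry; apply prefix_agree; auto. Qed.

Lemma lim_branch c : branch T (lim c).
Proof.
  intros n. apply (agree_branch _ (zf (nd c n))). apply HB, nd_G.
  apply (agree_le _ _ (nf (nd c n))). apply nd_nf. apply lim_agree.
Qed.

Definition PP (y : nat -> A) : Prop :=
  branch T y /\ forall k, exists c, agree y (zf (nd c k)) (nf (nd c k)).

Lemma first_diff (c c' : nat -> bool) k : ~ (forall j, (j < k)%nat -> c j = c' j) ->
  exists j, (j < k)%nat /\ (forall i, (i < j)%nat -> c i = c' i) /\ c j <> c' j.
Proof.
  induction k; intros H. exfalso; apply H; intros; lia.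
  destruct (classic (forall j, (j < k)%nat -> c j = c' j)) as [H1|H1].
  - exists k. split. lia. split. auto. intros E. apply H. intros j Hj.
    destruct (Nat.eq_dec j k). subst; auto. apply H1; lia.
  - destruct (IHk H1) as (j&?&?&?). exists j. split. lia. auto.
Qed.

Lemma incompat c c' k k' y : agree y (zf (nd c k)) (nf (nd c k)) ->
  agree y (zf (nd c' k')) (nf (nd c' k')) -> forall j, (j < k)%nat -> (j < k')%nat -> c j = c' j.
Proof.
  intros H1 H2 j Hj Hj'. apply NNPP. intros Hne.
  destruct (first_diff c c' (S j)) as (j0&Hj0&Heq&Hd).
  { intros Hall. apply Hne, Hall; lia. }
  assert (E : nd c j0 = nd c' j0) by (apply nd_ext; auto).
  pose proof (nd_G c j0) as Gj.
  destruct (Hinc _ Gj) as (i&Hi1&Hi2&Hdi).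
  assert (Y1 : y i = zf (nd c (S j0)) i).
  { assert (Hle : (S j0 <= k)%nat) by lia. pose proof (nd_mono c (S j0) k Hle) as [M1 M2].
    assert (Hi : (i < nf (nd c (S j0)))%nat) by (simpl; destruct (c j0); lia).
    rewrite H1 by lia. apply M2. auto. }
  assert (Y2 : y i = zf (nd c' (S j0)) i).
  { assert (Hle : (S j0 <= k')%nat) by lia. pose proof (nd_mono c' (S j0) k' Hle) as [M1 M2].
    assert (Hi : (i < nf (nd c' (S j0)))%nat) by (simpl; rewrite <- E; destruct (c' j0); lia).
    rewrite H2 by lia. apply M2. auto. }
  simpl in Y1, Y2. rewrite <- E in Y2.
  destruct (c j0) eqn:Ec, (c' j0) eqn:Ec'; try congruence.
Qed.

Lemma PP_path y : PP y -> exists c, forall k, agree y (zf (nd c k)) (nf (nd c k)).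
Proof.
  intros [_ H]. destruct (choice _ H) as [cs Hcs].
  exists (fun j => cs (S j) j). intros k.
  replace (nd (fun j => cs (S j) j) k) with (nd (cs k) k). apply Hcs.
  apply nd_ext. intros j Hj. apply (incompat _ _ k (S j) y); auto; lia.
Qed.

Lemma nd_finite k : exists L : list Nd, forall c, In (nd c k) L.
Proof.
  induction k. exists [u0]. simpl; auto.
  destruct IHk as [L HL]. exists (flat_map (fun u => [sp u true; sp u false]) L).
  intros c. simpl. apply in_flat_map. exists (nd c k). split. auto.
  destruct (c k); simpl; auto.
Qed.

Lemma list_bound (L : list Nd) : exists M, forall u, In u L -> (nf u <= M)%nat.
Proof.
  induction L. exists 0%nat. simpl; tauto.
  destruct IHL as [M HM]. exists (Nat.max (nf a) M). intros u [<-|Hu]. lia.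
  specialize (HM u Hu). lia.
Qed.

Lemma PP_perfect : perfectX T PP.
Proof.
  split; [split|].
  - intros x Hx; apply Hx.
  - split. intros x Hx; apply Hx.
    intros y [Hy Hn]. apply not_and_or in Hn. destruct Hn as [Hn|Hn]. contradiction.
    apply not_all_ex_not in Hn. destruct Hn as [k Hk].
    destruct (nd_finite k) as [L HL]. destruct (list_bound L) as [M HM].
    exists M. intros y' Hy' Hp. split. auto. intros [_ HP]. apply Hk.
    destruct (HP k) as [c Hc]. exists c. apply prefix_agree in Hp.
    eapply agree_trans. apply agree_sym. apply (agree_le _ _ M). apply HM, HL. eauto.
    auto.
  - intros y Hy n. destruct (PP_path y Hy) as [c Hc].
    set (c' := fun j => if Nat.eq_dec j n then negb (c j) else c j).
    exists (lim c'). split; [split|].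
    + apply lim_branch.
    + intros k. exists c'. apply lim_agree.
    + assert (E : nd c n = nd c' n).
      { apply nd_ext. intros j Hj. unfold c'. destruct (Nat.eq_dec j n); auto; lia. }
      split.
      * intros Heq. pose proof (nd_G c n) as Gn. destruct (Hinc _ Gn) as (i&Hi1&Hi2&Hdi).
        assert (Y1 : y i = zf (nd c (S n)) i) by (apply Hc; simpl; destruct (c n); lia).
        assert (E2 : nd c' (S n) = sp (nd c n) (negb (c n))).
        { simpl. rewrite <- E. unfold c'. destruct (Nat.eq_dec n n); [reflexivity|lia]. }
        assert (Y2 : lim c' i = zf (nd c' (S n)) i) by (apply lim_agree; rewrite E2; destruct (c n); simpl; lia).
        rewrite E2 in Y2. simpl in Y1. rewrite Heq in Y2.
        destruct (c n); simpl in *; apply Hdi; congruence.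
      * apply prefix_agree. intros i Hi. pose proof (nd_nf c n).
        rewrite (lim_agree c' n) by (rewrite <- E; lia). rewrite <- E. symmetry. apply Hc. lia.
Qed.

Lemma PP_main : exists P, perfectX T P /\ (exists x, P x) /\
  forall y, P y -> branch T y /\ exists us : nat -> Nd, forall k, G (us k) /\ R (us k) (us (S k)) /\
     (k <= nf (us k))%nat /\ (nf (us k) < nf (us (S k)))%nat /\
     agree (zf (us (S k))) (zf (us k)) (nf (us k)) /\ agree y (zf (us k)) (nf (us k)).
Proof.
  exists PP. split. apply PP_perfect. split.
  - exists (lim (fun _ => true)). split. apply lim_branch. intros k; eexists; apply lim_agree.
  - intros y Hy. split. apply Hy. destruct (PP_path y Hy) as [c Hc]. exists (nd c).
    intros k. pose proof (Hsp (nd c k) (c k) (nd_G c k)) as (?&?&?&?).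
    split. apply nd_G. split. auto. split. apply nd_nf. auto.
Qed.
End Generic.
Open Scope R_scope.

Lemma perfect_from_split {A : Type} (T : list A -> Prop) {Nd : Type}
  (zf : Nd -> nat -> A) (nf : Nd -> nat) (G : Nd -> Prop) (R : Nd -> Nd -> Prop) (u0 : Nd) :
  (forall u, G u -> exists u1 u2, G u1 /\ G u2 /\ R u u1 /\ R u u2 /\
     (nf u < nf u1)%nat /\ (nf u < nf u2)%nat /\ agree (zf u1) (zf u) (nf u) /\
     agree (zf u2) (zf u) (nf u) /\
     exists i, (i < nf u1)%nat /\ (i < nf u2)%nat /\ zf u1 i <> zf u2 i) ->
  (forall u, G u -> branch T (zf u)) -> G u0 ->
  exists P, perfectX T P /\ (exists x, P x) /\
  forall y, P y -> branch T y /\ exists us : nat -> Nd, forall k, G (us k) /\ R (us k) (us (S k)) /\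
     (k <= nf (us k))%nat /\ (nf (us k) < nf (us (S k)))%nat /\
     agree (zf (us (S k))) (zf (us k)) (nf (us k)) /\ agree y (zf (us k)) (nf (us k)).
Proof.
  intros HS HB HG0.
  assert (Hc : forall u, exists p : Nd * Nd, G u -> G (fst p) /\ G (snd p) /\ R u (fst p) /\ R u (snd p) /\
     (nf u < nf (fst p))%nat /\ (nf u < nf (snd p))%nat /\ agree (zf (fst p)) (zf u) (nf u) /\
     agree (zf (snd p)) (zf u) (nf u) /\
     exists i, (i < nf (fst p))%nat /\ (i < nf (snd p))%nat /\ zf (fst p) i <> zf (snd p) i).
  { intros u. destruct (classic (G u)) as [Gu|Gu].
    - destruct (HS u Gu) as (u1&u2&H). exists (u1,u2). intros _. exact H.
    - exists (u,u). intros; contradiction. }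
  destruct (choice _ Hc) as [f Hf].
  set (sp := fun u (b : bool) => if b then fst (f u) else snd (f u)).
  apply (PP_main T zf nf G R sp u0); auto.
  - intros u b Gu. destruct (Hf u Gu) as (?&?&?&?&?&?&?&?&?). destruct b; simpl; tauto.
  - intros u Gu. destruct (Hf u Gu) as (?&?&?&?&?&?&?&?&?). simpl. auto.
Qed.

Lemma LS_correct u : is_LimSup_seq u (LimSup_seq u).
Proof. unfold LimSup_seq. destruct (ex_LimSup_seq u); auto. Qed.

Lemma LS_io u r : LimSup_seq u = Finite r -> (forall N, exists n, (N <= n)%nat /\ u n > 1/2) -> r >= 1/2.
Proof.
  intros H Hio. pose proof (LS_correct u) as C. rewrite H in C. simpl in C.
  destruct (Rlt_or_le r (1/2)) as [Hr|Hr]; [|lra].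
  assert (Hp : 0 < 1/2 - r) by lra.
  destruct (C (mkposreal _ Hp)) as [_ [N HN]]. simpl in HN.
  destruct (Hio N) as (n&Hn&Hu). specialize (HN n Hn). lra.
Qed.

Lemma LS_ev u r : LimSup_seq u = Finite r -> (exists N, forall n, (N <= n)%nat -> u n <= 1/2) -> r <= 1/2.
Proof.
  intros H [N HN]. pose proof (LS_correct u) as C. rewrite H in C. simpl in C.
  destruct (Rlt_or_le (1/2) r) as [Hr|Hr]; [|lra].
  assert (Hp : 0 < r - 1/2) by lra.
  destruct (C (mkposreal _ Hp)) as [C1 _]. simpl in C1.
  destruct (C1 N) as (n&Hn&Hu). specialize (HN n Hn). lra.
Qed.

Lemma ind_hi {A : Type} (B : (nat -> A) -> Prop) x : indicator B x >= 1/2 -> B x.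
Proof. unfold indicator. destruct (excluded_middle_informative (B x)); auto. lra. Qed.
Lemma ind_lo {A : Type} (B : (nat -> A) -> Prop) x : indicator B x <= 1/2 -> ~ B x.
Proof. unfold indicator. destruct (excluded_middle_informative (B x)); auto. lra. Qed.

Section Count.
Context {A : Type} (T : list A -> Prop).

Definition cntU (l : list A) : Prop := exists g : (nat -> A) -> nat, forall x y,
  branch T x -> branch T y -> prefix x (length l) = l -> prefix y (length l) = l -> g x = g y -> x = y.

Definition good (z : nat -> A) (n : nat) : Prop := ~ cntU (prefix z n).

Lemma thru_iff (x z : nat -> A) n : prefix x (length (prefix z n)) = prefix z n <-> agree x z n.
Proof. rewrite prefix_length. apply prefix_agree. Qed.

Lemma good_branch z n : good z n -> exists y, branch T y /\ agree y z n.
Proof.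
  intros H. apply NNPP. intros H2. apply H. exists (fun _ => 0%nat).
  intros x y Hx _ Px _ _. exfalso. apply H2. exists x. split; auto. apply thru_iff; auto.
Qed.

Lemma good_ext y z n : agree y z n -> good z n -> good y n.
Proof. intros H. unfold good. replace (prefix y n) with (prefix z n). auto. symmetry; apply prefix_agree; auto. Qed.

Lemma good_root z : ~ countable_body T -> good z 0.
Proof.
  intros H [g Hg]. apply H. exists g. intros x y Hx Hy E. apply (Hg x y); auto.
Qed.

Fixpoint enc (f : A -> nat) (l : list A) : nat :=
  match l with [] => 0%nat | a :: l => S (to_nat (f a, enc f l)) end.

Lemma to_nat_inj p q : to_nat p = to_nat q -> p = q.
Proof. intros H. rewrite <- (cancel_of_to p), <- (cancel_of_to q), H. reflexivity. Qed.

Lemma enc_inj f : (forall a b, f a = f b -> a = b) -> forall l l', enc f l = enc f l' -> l = l'.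
Proof.
  intros Hf l. induction l as [|a l IH]; intros [|b l'] H; cbn [enc] in H; try discriminate; auto.
  apply Nat.succ_inj in H. apply to_nat_inj in H. injection H as H1 H2.
  f_equal; auto.
Qed.

Lemma good_split z n : @countable_type A -> good z n ->
  exists z1 n1 z2 n2, good z1 n1 /\ good z2 n2 /\ branch T z1 /\ branch T z2 /\
    (n < n1)%nat /\ (n < n2)%nat /\ agree z1 z n /\ agree z2 z n /\
    exists i, (i < n1)%nat /\ (i < n2)%nat /\ z1 i <> z2 i.
Proof.
  intros [f Hf] Hg. apply NNPP. intros H. apply Hg.
  set (gl := fun l => epsilon (inhabits (fun _ : nat -> A => 0%nat)) (fun g => forall x y,
     branch T x -> branch T y -> prefix x (length l) = l -> prefix y (length l) = l -> g x = g y -> x = y)).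
  assert (Hgl : forall l, cntU l -> forall x y,
     branch T x -> branch T y -> prefix x (length l) = l -> prefix y (length l) = l -> gl l x = gl l y -> x = y).
  { intros l Hl. unfold gl. apply (epsilon_spec (inhabits (fun _ : nat -> A => 0%nat))). exact Hl. }
  set (mx := fun x => epsilon (inhabits 0%nat) (fun m => ~ good x m)).
  exists (fun x => if excluded_middle_informative (forall m, good x m) then 0%nat
     else S (to_nat (enc f (prefix x (mx x)), gl (prefix x (mx x)) x))).
  intros x y Hx Hy Px Py.
  apply thru_iff in Px. apply thru_iff in Py.
  destruct (excluded_middle_informative (forall m, good x m)) as [Sx|Sx];
  destruct (excluded_middle_informative (forall m, good y m)) as [Sy|Sy]; intros E; try discriminate.
  - apply functional_extensionality. intros i. apply NNPP. intros Hne.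
    apply H. exists x, (S (Nat.max n i)), y, (S (Nat.max n i)).
    repeat split; auto; try lia. exists i. repeat split; auto; lia.
  - apply Nat.succ_inj in E. apply to_nat_inj in E. injection E as E1 E2.
    apply (enc_inj f Hf) in E1.
    assert (Mx : ~ good x (mx x)).
    { unfold mx. apply (epsilon_spec (inhabits 0%nat) (fun m => ~ good x m)).
      apply not_all_ex_not in Sx. exact Sx. }
    assert (Cx : cntU (prefix x (mx x))) by (apply NNPP; exact Mx).
    apply (Hgl _ Cx); auto.
    + rewrite prefix_length. reflexivity.
    + rewrite E1. rewrite prefix_length. reflexivity.
    + rewrite E2. rewrite E1. reflexivity.
Qed.
End Count.
Open Scope R_scope.

Section II.
Context {A : Type} (T : list A -> Prop) (tau : @strategyII A).

Fixpoint vl (x : nat -> A) (n : nat) : list R :=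
  match n with O => [] | S n => vl x n ++ [tau (prefix x (S n)) (vl x n)] end.
Definition vx (x : nat -> A) (t : nat) : R := tau (prefix x (S t)) (vl x t).

Lemma prefix_vx x n : prefix (vx x) n = vl x n.
Proof. induction n; simpl; auto. rewrite prefix_S, IHn. reflexivity. Qed.

Lemma follows_vx x : follows_II tau x (vx x).
Proof. intros t. rewrite prefix_vx. reflexivity. Qed.

Lemma vl_agree x y m n : agree x y m -> (n <= m)%nat -> vl x n = vl y n.
Proof.
  intros H. induction n; intros Hn; simpl; auto. rewrite IHn by lia.
  replace (prefix x (S n)) with (prefix y (S n)). reflexivity.
  symmetry. apply prefix_agree. apply (agree_le _ _ m); auto.
Qed.

Lemma vx_agree x y m t : agree x y m -> (t < m)%nat -> vx x t = vx y t.
Proof.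
  intros H Ht. unfold vx. rewrite (vl_agree x y m t H) by lia.
  replace (prefix x (S t)) with (prefix y (S t)). reflexivity.
  symmetry. apply prefix_agree. apply (agree_le _ _ m); auto.
Qed.

Lemma II_not_winning (B : (nat -> A) -> Prop) (a0 : A) : @countable_type A -> ~ countable_body T ->
  bernstein T B -> winning_II T (indicator B) tau -> False.
Proof.
  intros Hcnt Hcb [HBX [HnB HnC]] Hw.
  assert (Win : forall y, branch T y -> LimSup_seq (vx y) = Finite (indicator B y)).
  { intros y Hy. apply Hw; auto. apply follows_vx. }
  set (Nd := ((nat -> A) * nat)%type).
  destruct (classic (exists s m0, good T s m0 /\ branch T s /\ forall z n, good T z n -> branch T z ->
      agree z s m0 -> (m0 <= n)%nat -> exists z' n', good T z' n' /\ branch T z' /\ agree z' z n /\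
      (n < n')%nat /\ exists i, (n <= i < n')%nat /\ vx z' i > 1/2)) as [C1|C2].
  - destruct C1 as (s&m0&Gs&Bs&Hs).
    destruct (perfect_from_split T (fun u : Nd => fst u) (fun u : Nd => snd u)
      (fun u => good T (fst u) (snd u) /\ branch T (fst u) /\ agree (fst u) s m0 /\ (m0 <= snd u)%nat)
      (fun u u' => exists i, (snd u <= i < snd u')%nat /\ vx (fst u') i > 1/2) (s, m0))
      as (P&HP&[x0 Hx0]&HPy).
    + intros [z n] (Gz&Bz&Az&Hn). simpl in *.
      destruct (good_split T z n Hcnt Gz) as (z1&n1&z2&n2&G1&G2&B1&B2&L1&L2&A1&A2&i&I1&I2&Di).
      assert (As1 : agree z1 s m0) by (eapply agree_trans; [apply (agree_le _ _ n); eauto|auto]).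
      assert (As2 : agree z2 s m0) by (eapply agree_trans; [apply (agree_le _ _ n); eauto|auto]).
      destruct (Hs z1 n1 G1 B1 As1 ltac:(lia)) as (z1'&n1'&G1'&B1'&A1'&L1'&j1&J1&V1).
      destruct (Hs z2 n2 G2 B2 As2 ltac:(lia)) as (z2'&n2'&G2'&B2'&A2'&L2'&j2&J2&V2).
      assert (Q1 : agree z1' z n) by (eapply agree_trans; [apply (agree_le _ _ n1); [lia|eauto]|apply A1]).
      assert (Q2 : agree z2' z n) by (eapply agree_trans; [apply (agree_le _ _ n2); [lia|eauto]|apply A2]).
      assert (R1 : agree z1' s m0) by (eapply agree_trans; [apply (agree_le _ _ n); [lia|eauto]|apply Az]).
      assert (R2 : agree z2' s m0) by (eapply agree_trans; [apply (agree_le _ _ n); [lia|eauto]|apply Az]).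
      assert (D : z1' i <> z2' i) by (rewrite A1', A2' by lia; auto).
      exists (z1', n1'), (z2', n2'). simpl. repeat split; try assumption; try lia.
      * exists j1. split; auto. lia.
      * exists j2. split; auto. lia.
      * exists i. repeat split; try lia. auto.
    + intros [z n] H; apply H.
    + simpl. split; [auto|split;[auto|split;[intros i Hi; reflexivity|lia]]].
    + apply HnB. exists P. split; auto. split. eauto.
      intros y Hy. destruct (HPy y Hy) as [By [us Hus]].
      apply ind_hi. apply (LS_io (vx y)). apply Win; auto.
      intros N. destruct (Hus N) as (_&(i&Hi&Vi)&HN&_&_&_).
      destruct (Hus (S N)) as (_&_&_&_&_&Ay).
      exists i. split. lia. rewrite (vx_agree y (fst (us (S N))) (snd (us (S N)))); auto. lia.
  - assert (H : forall s m0, good T s m0 -> branch T s -> exists t m, good T t m /\ branch T t /\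
       agree t s m0 /\ (m0 <= m)%nat /\ forall z' n', good T z' n' -> branch T z' -> agree z' t m ->
       forall i, (m <= i < n')%nat -> vx z' i <= 1/2).
    { intros s m0 Gs Bs. apply NNPP. intros H. apply C2. exists s, m0. split; auto. split; auto.
      intros z n Gz Bz Az Hn. apply NNPP. intros H2. apply H. exists z, n.
      split; auto. split; auto. split; auto. split; auto.
      intros z' n' G' B' A' i Hi. apply Rnot_gt_le. intros Hv. apply H2.
      exists z', n'. split; auto. split; auto. split; auto. split. lia. exists i. auto. }
    assert (G0 : good T (fun _ => a0) 0) by (apply good_root; auto).
    destruct (good_branch T _ _ G0) as [y0 [By0 Ay0]].
    apply (good_ext T y0) in G0; auto.
    destruct (H y0 0%nat G0 By0) as (t&m&Gt&Bt&_&_&Ht).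
    destruct (perfect_from_split T (fun u : Nd => fst u) (fun u : Nd => snd u)
      (fun u => good T (fst u) (snd u) /\ branch T (fst u) /\ agree (fst u) t m /\ (m <= snd u)%nat)
      (fun u u' => True) (t, m))
      as (P&HP&[x0 Hx0]&HPy).
    + intros [z n] (Gz&Bz&Az&Hn). simpl in *.
      destruct (good_split T z n Hcnt Gz) as (z1&n1&z2&n2&G1&G2&B1&B2&L1&L2&A1&A2&i&I1&I2&Di).
      assert (R1 : agree z1 t m) by (eapply agree_trans; [apply (agree_le _ _ n); [lia|eauto]|apply Az]).
      assert (R2 : agree z2 t m) by (eapply agree_trans; [apply (agree_le _ _ n); [lia|eauto]|apply Az]).
      exists (z1, n1), (z2, n2). simpl. repeat split; try assumption; try lia.
      exists i. repeat split; try lia. auto.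
    + intros [z n] H'; apply H'.
    + simpl. split; [auto|split;[auto|split;[intros i Hi; reflexivity|lia]]].
    + apply HnC. exists P. split; auto. split. eauto.
      intros y Hy. destruct (HPy y Hy) as [By [us Hus]]. split; auto.
      apply ind_lo. apply (LS_ev (vx y)). apply Win; auto.
      exists m. intros n Hn. destruct (Hus (S n)) as ((Gk&Bk&Ak&Mk)&_&Kk&_&_&Ay).
      rewrite (vx_agree y (fst (us (S n))) (snd (us (S n)))) by (auto; lia).
      apply (Ht _ (snd (us (S n)))); auto.
Qed.
End II.
Open Scope R_scope.

Lemma LS_evc (u : nat -> R) c N : (forall t, (N <= t)%nat -> u t = c) -> LimSup_seq u = Finite c.
Proof.
  intros H. apply is_LimSup_seq_unique. simpl. intros eps. pose proof (cond_pos eps). split.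
  - intros N'. exists (Nat.max N N'). split. lia. rewrite H by lia. lra.
  - exists N. intros n Hn. rewrite H by lia. lra.
Qed.

Lemma LS_01 (v : nat -> R) : (forall t, v t = 0 \/ v t = 1) -> (forall N, exists n, (N <= n)%nat /\ v n = 1) ->
  LimSup_seq v = Finite 1.
Proof.
  intros H1 H2. apply is_LimSup_seq_unique. simpl. intros eps. pose proof (cond_pos eps). split.
  - intros N. destruct (H2 N) as (n&?&?). exists n. split; auto. lra.
  - exists 0%nat. intros n _. destruct (H1 n); lra.
Qed.

Lemma ind_neq0 {A : Type} (B : (nat -> A) -> Prop) x : Finite 0 <> Finite (indicator B x) -> B x.
Proof. unfold indicator. destruct (excluded_middle_informative (B x)); intros H; auto; exfalso; apply H; reflexivity. Qed.
Lemma ind_neq1 {A : Type} (B : (nat -> A) -> Prop) x : Finite 1 <> Finite (indicator B x) -> ~ B x.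
Proof. unfold indicator. destruct (excluded_middle_informative (B x)); intros H; auto; exfalso; apply H; reflexivity. Qed.

Section I.
Context {A : Type} (T : list A -> Prop) (sigma : @strategyI A).

Fixpoint xl (v : nat -> R) (n : nat) : list A :=
  match n with O => [] | S n => xl v n ++ [sigma (xl v n) (prefix v n)] end.
Definition xs (v : nat -> R) (t : nat) : A := sigma (xl v t) (prefix v t).

Lemma prefix_xs v n : prefix (xs v) n = xl v n.
Proof. induction n; simpl; auto. rewrite prefix_S, IHn. reflexivity. Qed.

Lemma follows_xs v : follows_I sigma (xs v) v.
Proof. intros t. rewrite prefix_xs. reflexivity. Qed.

Lemma xl_agree v v' m n : agree v v' m -> (n <= m)%nat -> xl v n = xl v' n.
Proof.
  intros H. induction n; intros Hn; simpl; auto. rewrite IHn by lia.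
  replace (prefix v n) with (prefix v' n). reflexivity.
  symmetry. apply prefix_agree. apply (agree_le _ _ m); auto; lia.
Qed.

Lemma xs_agree v v' m t : agree v v' m -> (t <= m)%nat -> xs v t = xs v' t.
Proof.
  intros H Ht. unfold xs. rewrite (xl_agree v v' m t H) by lia.
  replace (prefix v t) with (prefix v' t). reflexivity.
  symmetry. apply prefix_agree. apply (agree_le _ _ m); auto.
Qed.

Lemma I_not_winning (B : (nat -> A) -> Prop) :
  bernstein T B -> winning_I T (indicator B) sigma -> False.
Proof.
  intros [HBX [HnB HnC]] Hw.
  assert (Win : forall v, branch T (xs v) /\ LimSup_seq v <> Finite (indicator B (xs v))).
  { intros v. apply Hw. apply follows_xs. }
  set (Nd := ((nat -> R) * nat)%type).
  destruct (perfect_from_split T (fun u : Nd => xs (fst u)) (fun u : Nd => snd u)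
      (fun u => (forall t, (snd u <= t)%nat -> fst u t = 0) /\ (forall t, fst u t = 0 \/ fst u t = 1))
      (fun u u' => agree (fst u') (fst u) (snd u) /\ exists j, (snd u <= j < snd u')%nat /\ fst u' j = 1)
      (fun _ => 0, 0%nat))
      as (P&HP&[x0 Hx0]&HPy).
  - intros [w h] [Z01 V01]. simpl in *.
    set (w1 := fun t => if lt_dec t h then w t else 1).
    assert (Bw : B (xs w)).
    { apply ind_neq0. rewrite <- (LS_evc w 0 h Z01). apply Win. }
    assert (Bw1 : ~ B (xs w1)).
    { apply ind_neq1. rewrite <- (LS_evc w1 1 h). apply Win.
      intros t Ht. unfold w1. destruct (lt_dec t h); auto; lia. }
    assert (Aw : agree w1 w h) by (intros t Ht; unfold w1; destruct (lt_dec t h); auto; lia).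
    assert (Ne : xs w <> xs w1) by (intros E; rewrite E in Bw; auto).
    destruct (not_all_ex_not _ _ (fun H => Ne (functional_extensionality _ _ H))) as [i Hi].
    assert (Hih : (h < i)%nat).
    { destruct (Nat.lt_ge_cases h i) as [?|Hle]; auto. exfalso. apply Hi.
      symmetry. apply (xs_agree w1 w h); auto. }
    set (wa := fun t => if lt_dec t i then w t else if Nat.eq_dec t i then 1 else 0).
    set (wb := fun t => if lt_dec t i then w1 t else if Nat.eq_dec t i then 1 else 0).
    assert (Aa : agree wa w i) by (intros t Ht; unfold wa; destruct (lt_dec t i); auto; lia).
    assert (Ab : agree wb w1 i) by (intros t Ht; unfold wb; destruct (lt_dec t i); auto; lia).
    exists (wa, S i), (wb, S i). simpl.
    split; [|split; [|split; [|split; [|split; [|split; [|split; [|split]]]]]]].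
    + split.
      * intros t Ht. unfold wa. destruct (lt_dec t i); [lia|]. destruct (Nat.eq_dec t i); [lia|auto].
      * intros t. unfold wa. destruct (lt_dec t i); auto. destruct (Nat.eq_dec t i); auto.
    + split.
      * intros t Ht. unfold wb. destruct (lt_dec t i); [lia|]. destruct (Nat.eq_dec t i); [lia|auto].
      * intros t. unfold wb. destruct (lt_dec t i); auto.
        unfold w1. destruct (lt_dec t h); auto. destruct (Nat.eq_dec t i); auto.
    + split. apply (agree_le _ _ i); auto; lia.
      exists i. split. lia. unfold wa. destruct (lt_dec i i); [lia|]. destruct (Nat.eq_dec i i); auto; lia.
    + split. eapply agree_trans. apply (agree_le _ _ i); [lia|exact Ab]. exact Aw.
      exists i. split. lia. unfold wb. destruct (lt_dec i i); [lia|]. destruct (Nat.eq_dec i i); auto; lia.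
    + lia.
    + lia.
    + intros t Ht. apply (xs_agree wa w i); auto; lia.
    + intros t Ht. apply (xs_agree wb w h). eapply agree_trans. apply (agree_le _ _ i); [lia|exact Ab]. exact Aw. lia.
    + exists i. split. lia. split. lia.
      rewrite (xs_agree wa w i), (xs_agree wb w1 i); auto.
  - intros u _. apply Win.
  - simpl. split; auto.
  - apply HnC. exists P. split; auto. split. eauto.
    intros y Hy. destruct (HPy y Hy) as [By [us Hus]]. split; auto.
    assert (Ch : forall k k', (k <= k')%nat -> agree (fst (us k')) (fst (us k)) (snd (us k))).
    { intros k k' Hk. induction Hk. intros t _; reflexivity.
      destruct (Hus m) as (_&(Ag&_)&_&Lt&_&_).
      intros t Ht. rewrite Ag. apply IHHk; auto.
      assert (snd (us k) <= snd (us m))%nat.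
      { clear -Hk Hus. induction Hk. lia. destruct (Hus m) as (_&_&_&?&_). lia. }
      lia. }
    set (v := fun t => fst (us (S t)) t).
    assert (Av : forall k, agree v (fst (us k)) (snd (us k))).
    { intros k t Ht. unfold v. destruct (Nat.le_ge_cases k (S t)) as [Hk|Hk].
      - apply Ch; auto.
      - symmetry. apply Ch; auto. destruct (Hus (S t)) as (_&_&?&_). lia. }
    assert (Ey : y = xs v).
    { apply functional_extensionality. intros t.
      destruct (Hus (S t)) as (_&_&Kt&_&_&Ay).
      rewrite Ay by lia. symmetry. apply (xs_agree v _ (snd (us (S t)))); auto; lia. }
    assert (L1 : LimSup_seq v = Finite 1).
    { apply LS_01.
      - intros t. unfold v. destruct (Hus (S t)) as ((_&H01)&_). apply H01.
      - intros N. destruct (Hus N) as (_&(_&(j&Hj&Vj))&KN&_). exists j. split. lia.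
        rewrite (Av (S N)). auto. lia. }
    apply ind_neq1. rewrite Ey, <- L1. apply Win.
Qed.
End I.

Theorem mainTheorem7 (A : Type) (T : list A -> Prop) (B : (nat -> A) -> Prop) :
  inhabited A -> @countable_type A ->
  is_tree T -> is_pruned T ->
  ~ countable_body T ->
  bernstein T B ->
  ~ determined T (indicator B).
Proof.
  intros [a0] Hc _ _ Hcb Hb [[sigma Hs]|[tau Ht]].
  - exact (I_not_winning T sigma B Hb Hs).
  - exact (II_not_winning T tau B a0 Hc Hcb Hb Ht).
Qed.
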